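(* For every positive integer $N$, the space of slab tilings of the box $[0,4]\times[0,4]\times[0,N]$ has exactly one connected component under flips.
   Context: A slab is a $2\times2\times1$ box (any orientation) which is a union of four unit cubes $[x,x+1]\times[y,y+1]\times[z,z+1]$, $(x,y,z)\in\mathbb{Z}^3$. A flip takes two slabs whose union is a $2\times2\times2$ cube and replaces them by one of the two other pairs of slabs tiling that cube. Flip components are the connected components of the graph whose vertices are the slab tilings and whose edges join tilings differing by one flip. *)

(* Defs.v *)
From mathcomp Require Import all_boot.
From Stdlib Require Import Relation_Operators.
Set Implicit Arguments. Unset Strict Implicit. Unset Printing Implicit Defensive.

(* Unit cubes of the box [0,4]x[0,4]x[0,N]: the cube [x,x+1]x[y,y+1]x[z,z+1]
   is identified with its corner (x,y,z), x<4, y<4, z<N. *)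
Definition cell (N : nat) : finType := ('I_4 * 'I_4 * 'I_N)%type.

Definition cx N (c : cell N) : nat := c.1.1.
Definition cy N (c : cell N) : nat := c.1.2.
Definition cz N (c : cell N) : nat := c.2.

Definition box_cells N (x0 y0 z0 a b c : nat) : {set cell N} :=
  [set q : cell N | [&& x0 <= cx q < x0 + a, y0 <= cy q < y0 + b
                      & z0 <= cz q < z0 + c]].

Definition box_inside N (x0 y0 z0 a b c : nat) : bool :=
  [&& x0 + a <= 4, y0 + b <= 4 & z0 + c <= N].

Definition is_slab N (S : {set cell N}) : Prop :=
  exists x0 y0 z0 a b c,
    [|| [&& a == 2, b == 2 & c == 1], [&& a == 2, b == 1 & c == 2]
      | [&& a == 1, b == 2 & c == 2]] /\
    box_inside N x0 y0 z0 a b c /\ S = box_cells N x0 y0 z0 a b c.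

Definition is_cube2 N (S : {set cell N}) : Prop :=
  exists x0 y0 z0, box_inside N x0 y0 z0 2 2 2 /\ S = box_cells N x0 y0 z0 2 2 2.

Definition is_tiling N (T : {set {set cell N}}) : Prop :=
  partition T [set: cell N] /\ forall S, S \in T -> is_slab S.

Definition flip N (T T' : {set {set cell N}}) : Prop :=
  is_tiling T /\ is_tiling T' /\
  exists a b c d : {set cell N},
    a \in T /\ b \in T /\ a != b /\ is_cube2 (a :|: b) /\
    is_slab c /\ is_slab d /\ [disjoint c & d] /\
    c :|: d = a :|: b /\ [set c; d] != [set a; b] /\
    T' = (T :\: [set a; b]) :|: [set c; d].

Definition one_flip_component N : Prop :=
  (exists T, is_tiling (N:=N) T) /\
  forall T T' : {set {set cell N}}, is_tiling T -> is_tiling T' ->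
    clos_refl_trans _ (@flip N) T T'.

(* Main.v *)
Require Import Defs.
From mathcomp Require Import all_boot.
From Stdlib Require Import Relation_Operators.
From mathcomp Require Import zify.
Set Implicit Arguments. Unset Strict Implicit. Unset Printing Implicit Defensive.


Definition desc := (nat * nat * nat * nat)%type.
Definition cell3 := (nat * nat * nat)%type.
Definition dO (d : desc) := d.1.1.1.
Definition dX (d : desc) := d.1.1.2.
Definition dY (d : desc) := d.1.2.
Definition dZ (d : desc) := d.2.
Definition da (o : nat) := if o == 2 then 1 else 2.
Definition db (o : nat) := if o == 1 then 1 else 2.
Definition dc (o : nat) := if o == 0 then 1 else 2.

Definition inD (d : desc) (q : cell3) : bool :=
  [&& dX d <= q.1.1 < dX d + da (dO d), dY d <= q.1.2 < dY d + db (dO d)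
    & dZ d <= q.2 < dZ d + dc (dO d)].
Definition validd (h : nat) (cr : bool) (d : desc) : bool :=
  [&& dO d < 3, dX d + da (dO d) <= 4, dY d + db (dO d) <= 4, dZ d < h
    & (dZ d + dc (dO d) <= h) || cr].
Definition gen (h : nat) : seq desc :=
  [seq (ox.1, ox.2, yz.1, yz.2) | ox <- [seq (o, x) | o <- iota 0 3, x <- iota 0 4],
                                  yz <- [seq (y, z) | y <- iota 0 4, z <- iota 0 h]].
Definition alld h cr : seq desc := [seq d <- gen h | validd h cr d].
Definition cellOf (i : nat) : cell3 := (i %% 4, (i %/ 4) %% 4, i %/ 16).
Definition wcells (h : nat) : seq cell3 := [seq cellOf i | i <- iota 0 (16 * h)].
Definition noncross (h : nat) (d : desc) := dZ d + dc (dO d) <= h.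
Definition isPartner (d e : desc) : bool :=
  [&& dO e == dO d, dZ e == dZ d &
   if dO d == 1 then (dX e == dX d) && ((dY e == (dY d).+1) || ((dY e).+1 == dY d))
   else (dY e == dY d) && ((dX e == (dX d).+1) || ((dX e).+1 == dX d))].
Definition coords (h : nat) (l : seq desc) : seq nat :=
  let H := count (fun d => dO d == 0) l in
  [:: 4 * H + 2 * count (fun d => [&& dO d != 0, noncross h d & has (isPartner d) l]) l; 4 * H].
Fixpoint lexlt (v w : seq nat) : bool :=
  match v, w with
  | a :: v', b :: w' => (a < b) || ((a == b) && lexlt v' w')
  | _, _ => false
  end.
Definition cube := (nat * nat * nat)%type.
Definition pr (q : cube) (o : nat) : seq desc :=
  let: (X, Y, Z) := q in
  if o == 0 then [:: (0, X, Y, Z); (0, X, Y, Z.+1)]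
  else if o == 1 then [:: (1, X, Y, Z); (1, X, Y.+1, Z)]
  else [:: (2, X, Y, Z); (2, X.+1, Y, Z)].
Definition flipT := (cube * nat * nat)%type.
Definition cubeOK (h : nat) (q : cube) := [&& q.1.1 <= 2, q.1.2 <= 2 & q.2.+2 <= h].
Definition canon0 : seq desc := [:: (0, 0, 0, 0); (0, 2, 0, 0); (0, 0, 2, 0); (0, 2, 2, 0)].
Fixpoint hasL (T : Type) (p : T -> bool) (s : seq T) : bool :=
  if s is x :: s' then (if p x then true else hasL p s') else false.
Fixpoint allL (T : Type) (p : T -> bool) (s : seq T) : bool :=
  if s is x :: s' then (if p x then allL p s' else false) else true.
Definition covered (P : seq desc) (q : cell3) := hasL (fun d => inD d q) P.
Definition corner_cands h cr (c : cell3) : seq desc :=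
  [seq d <- [:: (0, c.1.1, c.1.2, c.2); (1, c.1.1, c.1.2, c.2); (2, c.1.1, c.1.2, c.2)] | validd h cr d].
Definition cands h cr (wc : seq cell3) (P : seq desc) (c : cell3) : seq desc :=
  [seq d <- corner_cands h cr c | allL (fun q => if inD d q then ~~ covered P q else true) wc].
Definition layP (P : seq desc) (z : nat) := undup [seq d <- P | dZ d == z].
Definition coords2 h (P : seq desc) (Z : nat) := coords h (layP P Z) ++ coords h (layP P Z.+1).
Definition flipsP (P : seq desc) : seq flipT :=
  [seq ((dX d, dY d, dZ d), dO d, o2) | d <- P, o2 <- iota 0 3].
Definition applyL (P : seq desc) (f : flipT) : seq desc :=
  pr f.1.1 f.2 ++ [seq d <- P | d \notin pr f.1.1 f.1.2].
Definition test h (P : seq desc) (lo hi : nat) : bool :=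
  if allL (fun d => d \in P) canon0 then true else
  hasL (fun f => if (lo <= (f.1.1.2).+2) then if ((f.1.1.2).+2 <= hi) then if [&& cubeOK h f.1.1, f.1.2 < 3, f.2 < 3 & f.1.2 != f.2] then
                  if allL (fun d => d \in P) (pr f.1.1 f.1.2)
                  then lexlt (coords2 h P f.1.1.2) (coords2 h (applyL P f) f.1.1.2) else false else false else false else false) (flipsP P).
Fixpoint chk h cr (wc : seq cell3) (n : nat) (P : seq desc) (t : nat) : bool :=
  if n is n'.+1 then
    let c := find (fun q => ~~ covered P q) wc in
    let L := if c < size wc then (nth (0, 0, 0) wc c).2 else h in
    if (if t < L then test h P t.+1 L else false) then true else
    if c < size wc then allL (fun d => chk h cr wc n' (d :: P) L) (cands h cr wc P (nth (0, 0, 0) wc c))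
    else false
  else false.

Definition lay h cr (mem : pred desc) (z : nat) : seq desc :=
  [seq d <- alld h cr | mem d && (dZ d == z)].
Definition vec h cr (mem : pred desc) : seq nat :=
  flatten [seq coords h (lay h cr mem z) | z <- iota 0 h].
Definition applyF (mem : pred desc) (f : flipT) : pred desc :=
  fun d => (mem d && (d \notin pr f.1.1 f.1.2)) || (d \in pr f.1.1 f.2).
Definition flipOK h (f : flipT) := [&& cubeOK h f.1.1, f.1.2 < 3, f.2 < 3 & f.1.2 != f.2].


Lemma hasLE T (p : T -> bool) s : hasL p s = has p s.
Proof. by elim: s => //= x s ->; case: (p x). Qed.
Lemma allLE T (p : T -> bool) s : allL p s = all p s.
Proof. by elim: s => //= x s ->; case: (p x). Qed.

Definition code (q : cell3) := q.1.1 + 4 * q.1.2 + 16 * q.2.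

Lemma size_wcells h : size (wcells h) = 16 * h.
Proof. by rewrite size_map size_iota. Qed.
Lemma nth_wcells h i : i < 16 * h -> nth (0,0,0) (wcells h) i = cellOf i.
Proof. by move=> hi; rewrite (nth_map 0) ?size_iota // nth_iota. Qed.
Lemma cellOfK q : q.1.1 < 4 -> q.1.2 < 4 -> cellOf (code q) = q.
Proof.
case: q => [[x y] z] /= hx hy; rewrite /cellOf /code /=.
have e1 : (x + 4 * y + 16 * z) %% 4 = x by lia.
have e2 : ((x + 4 * y + 16 * z) %/ 4) %% 4 = y by lia.
have e3 : (x + 4 * y + 16 * z) %/ 16 = z by lia.
by rewrite e1 e2 e3.
Qed.
Lemma codeK i : code (cellOf i) = i.
Proof. rewrite /code /cellOf /=; lia. Qed.
Lemma cellOf_bounds h (i : nat) : i < 16 * h ->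
  [&& (cellOf i).1.1 < 4, (cellOf i).1.2 < 4 & (cellOf i).2 < h].
Proof. rewrite /cellOf /=; lia. Qed.
Lemma mem_wcells h q : (q \in wcells h) = [&& q.1.1 < 4, q.1.2 < 4 & q.2 < h].
Proof.
apply/mapP/idP.
  by case=> i; rewrite mem_iota add0n => /andP[_ hi] ->; exact: cellOf_bounds hi.
case: q => [[x y] z] /= /and3P[h1 h2 h3]; exists (code (x, y, z)); last by rewrite cellOfK.
rewrite mem_iota /code /=; lia.
Qed.

Lemma da_ge1 o : 0 < da o. Proof. by rewrite /da; case: ifP. Qed.
Lemma db_ge1 o : 0 < db o. Proof. by rewrite /db; case: ifP. Qed.
Lemma dc_ge1 o : 0 < dc o. Proof. by rewrite /dc; case: ifP. Qed.

Lemma validd_bounds h cr d : validd h cr d ->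
  [/\ dO d < 3, dX d < 4, dY d < 4 & dZ d < h].
Proof.
have := da_ge1 (dO d); have := db_ge1 (dO d).
rewrite /validd => ha hb /and5P[h1 h2 h3 h4 _]; split => //; lia.
Qed.

Lemma mem_gen h d : dO d < 3 -> dX d < 4 -> dY d < 4 -> dZ d < h -> d \in gen h.
Proof.
case: d => [[[o x] y] z]; rewrite /dO /dX /dY /dZ /= => ho hx hy hz.
have -> : (o, x, y, z) = (fun ox yz => (ox.1, ox.2, yz.1, yz.2) : desc) (o, x) (y, z) by [].
apply: allpairs_f; apply: allpairs_f; rewrite mem_iota; lia.
Qed.

Lemma mem_alld h cr d : (d \in alld h cr) = validd h cr d.
Proof.
rewrite mem_filter; case V: (validd h cr d) => //=.
by case: (validd_bounds V) => *; apply: mem_gen.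
Qed.

Lemma inD_corner h cr d : validd h cr d -> inD d (dX d, dY d, dZ d).
Proof.
move=> _; have := da_ge1 (dO d); have := db_ge1 (dO d); have := dc_ge1 (dO d).
rewrite /inD /=; lia.
Qed.

Lemma corner_wc h cr d : validd h cr d -> (dX d, dY d, dZ d) \in wcells h.
Proof. by case/validd_bounds => *; rewrite mem_wcells /=; apply/and3P. Qed.

Lemma pr_valid h cr q o : cubeOK h q -> o < 3 -> {subset pr q o <= alld h cr}.
Proof.
case: q => [[X Y] Z]; rewrite /cubeOK /= => /and3P[hX hY hZ].
case: o => [|[|[|o]]] // _ d; rewrite /pr /= !inE => /orP[]/eqP->;
  rewrite mem_alld /validd /dO /dX /dY /dZ /da /db /dc /=; lia.
Qed.

Lemma pr_dZ q o d : d \in pr q o -> dZ d = q.2 \/ dZ d = q.2.+1.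
Proof.
case: q => [[X Y] Z]; rewrite /pr /=.
by case: ifP => _; [|case: ifP => _]; rewrite !inE => /orP[]/eqP->; auto.
Qed.

Lemma size_coords h l : size (coords h l) = 2. Proof. by []. Qed.

Lemma coords_perm h l1 l2 : uniq l1 -> uniq l2 -> l1 =i l2 -> coords h l1 = coords h l2.
Proof.
move=> u1 u2 e; have pe := uniq_perm u1 u2 e; rewrite /coords.
have -> : count (fun d => [&& dO d != 0, noncross h d & has (isPartner d) l1]) l1 =
          count (fun d => [&& dO d != 0, noncross h d & has (isPartner d) l2]) l1.
  by apply: eq_count => d; rewrite (eq_has_r e).
by rewrite !(permP pe).
Qed.

Lemma lexlt_catl A v w : lexlt (A ++ v) (A ++ w) = lexlt v w.
Proof. by elim: A => //= a A ->; rewrite ltnn eqxx. Qed.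
Lemma lexlt_catr v w C : size v = size w -> lexlt v w -> lexlt (v ++ C) (w ++ C).
Proof.
elim: v w => [|a v IH] [|b w] //= [e] /orP[->//|/andP[-> H]].
by rewrite IH // orbT.
Qed.

Lemma iota_split h Z : Z.+2 <= h ->
  iota 0 h = iota 0 Z ++ [:: Z; Z.+1] ++ iota Z.+2 (h - Z.+2).
Proof.
move=> hZ; have e : h = Z + (2 + (h - Z.+2)) by lia.
rewrite {1}e iotaD iotaD add0n /=; congr (_ ++ _ :: _ :: _); congr iota; lia.
Qed.


Section Sound.
Variables (h : nat) (cr : bool) (mem : pred desc).
Local Notation wc := (wcells h).
Hypothesis Hu : uniq (alld h cr).
Hypothesis Hmem : forall d, mem d -> d \in alld h cr.
Hypothesis Hcov : forall q, q \in wc -> exists d, mem d && inD d q.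
Hypothesis Huni : forall d d' q, q \in wc -> mem d -> mem d' -> inD d q -> inD d' q -> d = d'.

Definition improving (f : flipT) :=
  [&& flipOK h f, all mem (pr f.1.1 f.1.2) & lexlt (vec h cr mem) (vec h cr (applyF mem f))].

Lemma code_lt (q : cell3) L : q.1.1 < 4 -> q.1.2 < 4 -> q.2 < L -> code q < 16 * L.
Proof. case: q => [[x y] z] /=; rewrite /code /=; lia. Qed.

Lemma vec_split (m : pred desc) Z : Z.+2 <= h ->
  vec h cr m = flatten [seq coords h (lay h cr m z) | z <- iota 0 Z] ++
     (coords h (lay h cr m Z) ++ coords h (lay h cr m Z.+1)) ++
     flatten [seq coords h (lay h cr m z) | z <- iota Z.+2 (h - Z.+2)].
Proof.
move=> hZ; rewrite /vec (iota_split hZ) !map_cat !flatten_cat /=.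
by [].
Qed.

Lemma chk_sound n : forall P t, chk h cr wc n P t -> {subset P <= mem} ->
  all mem canon0 \/ exists f, improving f.
Proof.
elim: n => [//|n IH] P t /=.
set c := find _ _.
set L := if c < size wc then _ else h.
move=> Hc HP.
have PA : forall d, d \in P -> d \in alld h cr by move=> d /HP /Hmem.
have covL : forall q, q \in wc -> q.2 < L -> covered P q.
  move=> q qw qL.
  have qw' := qw; rewrite mem_wcells in qw'.
  case/and3P: qw' => q1 q2 q3.
  have hq : code q < c.
    rewrite /L in qL; move: qL; case: ifP => cs qL.
      rewrite size_wcells in cs; rewrite nth_wcells // /cellOf /= in qL.
      have := code_lt q1 q2 qL; lia.
    rewrite size_wcells in cs; have := code_lt q1 q2 q3; lia.
  have := before_find (0,0,0) hq.
  have hq2 : code q < 16 * h by exact: code_lt q1 q2 q3.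
  by rewrite nth_wcells // cellOfK // => /negbFE.
have agree : forall d, dZ d < L -> ((d \in alld h cr) && mem d) = (d \in P).
  move=> d dL; apply/idP/idP; last by move=> dP; rewrite PA //=; exact: HP.
  case/andP=> dA md; have v : validd h cr d by rewrite -mem_alld.
  have := covL _ (corner_wc v) dL; rewrite /covered hasLE => /hasP[d' d'P i'].
  by rewrite (Huni (corner_wc v) md (HP _ d'P) (inD_corner v) i').
case: ifP Hc => [Htest _ | _ Hc].
  move: Htest; case: ifP => // tL; rewrite /test; case: ifP => [Hg _ | _ Hf].
    left; change (all mem canon0); rewrite allLE in Hg; apply/allP => d dc; exact: HP (allP Hg d dc).
  right; rewrite hasLE in Hf; case/hasP: Hf => f _.
  case: ifP => // lo; case: ifP => // hi; case: ifP => // fok; case: ifP => // Hpr Hlex.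
  exists f; rewrite /improving /flipOK fok /=.
  rewrite allLE in Hpr.
  have -> /= : all mem (pr f.1.1 f.1.2) by apply/allP => d /(allP Hpr) /HP.
  move: fok => /and4P[cOK o1 o2 o12].
  set q := f.1.1 in cOK Hpr Hlex lo hi *.
  set Z := q.2 in lo hi Hlex *.
  have hZ : Z.+2 <= h by case/and3P: cOK.
  rewrite (vec_split mem hZ) (vec_split (applyF mem f) hZ).
  have eqo : forall z, z \in iota 0 Z ++ iota Z.+2 (h - Z.+2) ->
      lay h cr (applyF mem f) z = lay h cr mem z.
    move=> z; rewrite mem_cat !mem_iota => zr.
    apply: eq_filter => d; rewrite /applyF.
    case: (eqVneq (dZ d) z) => [dz|]; last by rewrite !andbF.
    have n1 : d \notin pr q f.1.2.
      by apply/negP => /pr_dZ; rewrite dz -/Z; lia.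
    have n2 : d \notin pr q f.2.
      by apply/negP => /pr_dZ; rewrite dz -/Z; lia.
    by rewrite n1 (negbTE n2) andbT orbF.
  have e1 : [seq coords h (lay h cr (applyF mem f) z) | z <- iota 0 Z] =
            [seq coords h (lay h cr mem z) | z <- iota 0 Z].
    by apply/eq_in_map => z zi; rewrite eqo // mem_cat zi.
  have e2 : [seq coords h (lay h cr (applyF mem f) z) | z <- iota Z.+2 (h - Z.+2)] =
            [seq coords h (lay h cr mem z) | z <- iota Z.+2 (h - Z.+2)].
    by apply/eq_in_map => z zi; rewrite eqo // mem_cat zi orbT.
  rewrite e1 e2 lexlt_catl; apply: lexlt_catr => //.
  have lay1 : forall z, z < L -> coords h (lay h cr mem z) = coords h (layP P z).
    move=> z zL; apply: coords_perm; first exact: filter_uniq; first exact: undup_uniq.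
    move=> d; rewrite /lay /layP mem_undup [in RHS]mem_filter [in LHS]mem_filter.
    case dz: (dZ d == z); last by rewrite !andbF.
    move/eqP: dz => dz.
    by rewrite andbT /= -(agree d); [rewrite andbC | rewrite dz].
  have lay2 : forall z, z < L -> coords h (lay h cr (applyF mem f) z) = coords h (layP (applyL P f) z).
    move=> z zL; apply: coords_perm; first exact: filter_uniq; first exact: undup_uniq.
    move=> d; rewrite /lay /layP mem_undup [in RHS]mem_filter [in LHS]mem_filter /applyL mem_cat [in RHS]mem_filter /applyF.
    case dz: (dZ d == z); last by rewrite !andbF.
    move/eqP: dz => dz.
    have ag := agree d; rewrite dz in ag; have {}ag := ag zL.
    case p2: (d \in pr q f.2) => /=.
      by rewrite orbT /= (pr_valid cr cOK o2 p2).
    rewrite orbF andbT -ag.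
    by case: (d \in alld h cr); case: (mem d); rewrite /= ?andbT ?andbF.
  have ZL : Z < L by lia.
  have Z1L : Z.+1 < L by lia.
  by rewrite (lay1 _ ZL) (lay1 _ Z1L) (lay2 _ ZL) (lay2 _ Z1L).
move: Hc; case: ifP => // cs Hall.
set q := nth (0,0,0) wc c.
have qw : q \in wc by apply: mem_nth.
have qnc : ~~ covered P q.
  by apply: (@nth_find _ _ (fun q => ~~ covered P q)); rewrite has_find.
case: (Hcov qw) => d0 /andP[m0 i0].
have v0 : validd h cr d0 by rewrite -mem_alld; apply: Hmem.
have d0P : d0 \notin P.
  by apply: contra qnc => d0P; rewrite /covered hasLE; apply/hasP; exists d0.
have cq : code q = c by rewrite /q size_wcells in cs *; rewrite nth_wcells // codeK.
have corner : (dX d0, dY d0, dZ d0) = q.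
  have q0w := corner_wc v0.
  have := q0w; rewrite mem_wcells /= => /and3P[b1 b2 b3].
  have qb := qw; rewrite mem_wcells in qb; case/and3P: qb => b4 b5 b6.
  have le : code (dX d0, dY d0, dZ d0) <= c.
    rewrite -cq; move: i0 b4 b5 b6; rewrite /inD /code; case: (q) => [[x y] z] /=; lia.
  case: (ltngtP (code (dX d0, dY d0, dZ d0)) c) => [lt||eq]; last 2 first.
  - by move=> gt; move: le; rewrite leqNgt gt.
  - by rewrite -[LHS]cellOfK // -[RHS]cellOfK // eq cq.
  have := before_find (0,0,0) lt.
  have hq2 : code (dX d0, dY d0, dZ d0) < 16 * h by rewrite /code /=; lia.
  rewrite nth_wcells // cellOfK // => /negbFE; rewrite /covered hasLE => /hasP[d' d'P i'].
  have e := Huni q0w m0 (HP _ d'P) (inD_corner v0) i'.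
  by rewrite -e (negbTE d0P) in d'P.
have d0c : d0 \in cands h cr wc P q.
  rewrite mem_filter; apply/andP; split.
    rewrite allLE; apply/allP => q' q'w; case: ifP => // i'.
    apply/negP; rewrite /covered hasLE => /hasP[d' d'P i''].
    have e := Huni q'w m0 (HP _ d'P) i' i''.
    by rewrite -e (negbTE d0P) in d'P.
  rewrite /corner_cands mem_filter v0 /= -corner.
  case/validd_bounds: v0; case: d0 {m0 i0 d0P corner} => [[[o x] y] z].
  rewrite /dO /dX /dY /dZ /=.
  by case: o => [|[|[|o]]] //= *; rewrite !inE eqxx ?orbT.
rewrite allLE in Hall; have := allP Hall d0 d0c; move/IH; apply.
by move=> d; rewrite inE => /orP[/eqP->|/HP].
Qed.
End Sound.


Section Part.
Variable T : finType.
Implicit Types (P : {set {set T}}) (a b c d S : {set T}).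

Lemma part_eq P S S' x : trivIset P -> S \in P -> S' \in P -> x \in S -> x \in S' -> S = S'.
Proof.
move=> tI sP s'P xS xS'; apply/eqP; apply: contraT => ne.
have := disjointFr (trivIsetP tI S S' sP s'P ne) xS.
by rewrite xS'.
Qed.

Lemma disjP (A B : {set T}) : (forall x, x \in A -> x \in B -> False) -> [disjoint A & B].
Proof.
move=> H; rewrite disjoints_subset; apply/subsetP => x xA; rewrite inE; apply/negP => xB.
exact: H x xA xB.
Qed.

Lemma partition_replace P a b c d :
  partition P [set: T] -> a \in P -> b \in P -> c != set0 -> d != set0 ->
  [disjoint c & d] -> c :|: d = a :|: b ->
  partition ((P :\: [set a; b]) :|: [set c; d]) [set: T].
Proof.
case/and3P=> /eqP cP tI n0 aP bP c0 d0 cd e.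
have inab : forall x, (x \in c) || (x \in d) -> (x \in a) || (x \in b).
  by move=> x h; rewrite -in_setU -e in_setU.
have incd : forall x, (x \in a) || (x \in b) -> (x \in c) || (x \in d).
  by move=> x h; rewrite -in_setU e in_setU.
apply/and3P; split.
- apply/eqP/setP => x; rewrite inE; apply/bigcupP.
  have : x \in cover P by rewrite cP inE.
  case/bigcupP => S SP xS.
  case: (boolP (S \in [set a; b])) => Sab.
  + have xab : (x \in a) || (x \in b).
      by rewrite !inE in Sab; case/orP: Sab => /eqP <-; rewrite xS ?orbT.
    by case/orP: (incd x xab) => [xc|xd]; [exists c | exists d] => //; rewrite !inE eqxx ?orbT.
  + by exists S => //; rewrite in_setU in_setD Sab SP.
- apply/trivIsetP => A B; rewrite !inE => hA hB ne.
  apply: disjP => x xA xB.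
  have side : forall S U, ~~ ((S == a) || (S == b)) && (S \in P) -> (U == c) || (U == d) ->
      x \in S -> x \in U -> False.
    move=> S U /andP[]; rewrite negb_or => /andP[Sa Sb] SP /orP[]/eqP-> xS xU;
      have := inab x; rewrite xU ?orbT => /(_ isT) /orP[xa|xb].
    - by move: Sa; rewrite (part_eq tI SP aP xS xa) eqxx.
    - by move: Sb; rewrite (part_eq tI SP bP xS xb) eqxx.
    - by move: Sa; rewrite (part_eq tI SP aP xS xa) eqxx.
    - by move: Sb; rewrite (part_eq tI SP bP xS xb) eqxx.
  case/orP: hA => hA; case/orP: hB => hB.
  + case/andP: hA => _ AP; case/andP: hB => _ BP.
    by move: ne; rewrite (part_eq tI AP BP xA xB) eqxx.
  + exact: side hA hB xA xB.
  + exact: side hB hA xB xA.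
  + have : [disjoint c & d] by [].
    case/orP: hA => /eqP EA; case/orP: hB => /eqP EB; subst.
    * by rewrite eqxx in ne.
    * by rewrite (disjointFr cd xA) in xB.
    * by rewrite (disjointFr cd xB) in xA.
    * by rewrite eqxx in ne.
- rewrite !inE negb_or (negbTE n0) andbF /= eq_sym (negbTE c0) /= eq_sym.
  exact: d0.
Qed.

Lemma flip_sym_gen P a b c :
  partition P [set: T] -> a \in P -> b \in P -> c != set0 -> c \subset a :|: b ->
  c \notin P :\: [set a; b].
Proof.
case/and3P=> _ tI _ aP bP c0 sc.
rewrite !inE negb_and negbK; apply/orP; case: (boolP (c \in P)) => cP; last by right.
left; case/set0Pn: c0 => x xc.
have := subsetP sc x xc; rewrite inE => /orP[xa|xb].
- by rewrite (part_eq tI cP aP xc xa) eqxx.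
- by rewrite (part_eq tI cP bP xc xb) eqxx orbT.
Qed.
End Part.

Lemma slab_nonempty N (S : {set cell N}) : is_slab S -> S != set0.
Proof.
case=> x0 [y0 [z0 [a [b [c [ho [/and3P[hx hy hz] ->]]]]]]].
have ha : 0 < a by lia.
have hb : 0 < b by lia.
have hc : 0 < c by lia.
have hx' : x0 < 4 by lia.
have hy' : y0 < 4 by lia.
have hz' : z0 < N by lia.
apply/set0Pn; exists (Ordinal hx', Ordinal hy', Ordinal hz').
rewrite inE /cx /cy /cz /=; lia.
Qed.

Lemma flip_sym N (T T' : {set {set cell N}}) : flip T T' -> flip T' T.
Proof.
case=> tT [tT' [a [b [c [d [aT [bT [ab [cube [sc [sd [cd [e [ne eT']]]]]]]]]]]]]].
have c0 := slab_nonempty sc; have d0 := slab_nonempty sd.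
have a0 := slab_nonempty (tT.2 a aT); have b0 := slab_nonempty (tT.2 b bT).
split => //; split => //.
exists c, d, a, b.
have cT' : c \in T' by rewrite eT' !inE eqxx ?orbT.
have dT' : d \in T' by rewrite eT' !inE eqxx ?orbT.
have sc' : c \subset a :|: b by rewrite -e subsetUl.
have sd' : d \subset a :|: b by rewrite -e subsetUr.
have nc := flip_sym_gen tT.1 aT bT c0 sc'.
have nd := flip_sym_gen tT.1 aT bT d0 sd'.
have cdne : c != d.
  apply/eqP => E; subst d; case/set0Pn: c0 => x xc.
  by have := disjointFr cd xc; rewrite xc.
have abd : [disjoint a & b] by case: tT => /and3P[_ tI _] _; exact: (trivIsetP tI a b aT bT ab).
do 12?split => //.
- by rewrite e.
- exact: tT.2 a aT.
- exact: tT.2 b bT.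
- by rewrite eq_sym.
- apply/setP => S; rewrite eT' !inE.
  rewrite !inE negb_and negbK in nc nd.
  case: (eqVneq S a) => [->|Sa]; first by rewrite aT !orbT.
  case: (eqVneq S b) => [->|Sb]; first by rewrite bT !orbT.
  case: (eqVneq S c) => [Sc|Sc].
    by subst S; move: nc; rewrite (negbTE Sa) (negbTE Sb) /= => /negbTE ->.
  case: (eqVneq S d) => [Sd|Sd].
    by subst S; move: nd; rewrite (negbTE Sa) (negbTE Sb) /= => /negbTE ->.
  by rewrite /= ?andbT ?orbF; case: (S \in T).
Qed.

Lemma rt_sym N (T T' : {set {set cell N}}) :
  clos_refl_trans _ (@flip N) T T' -> clos_refl_trans _ (@flip N) T' T.
Proof.
elim=> [x y /flip_sym H|x|x y z _ H1 _ H2].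
- exact: rt_step.
- exact: rt_refl.
- exact: rt_trans H2 H1.
Qed.


Lemma pr_dO q o e : o < 3 -> e \in pr q o -> dO e = o.
Proof.
case: q => [[X Y] Z]; case: o => [|[|[|o]]] // _; rewrite /pr /= !inE => /orP[]/eqP->//.
Qed.

Section Real.
Variable N : nat.

Definition emb (k : nat) (d : desc) : {set cell N} :=
  box_cells N (dX d) (dY d) (k + dZ d) (da (dO d)) (db (dO d)) (dc (dO d)).

Definition canb k (T : {set {set cell N}}) := forall z x y, z < k ->
  (x == 0) || (x == 2) -> (y == 0) || (y == 2) -> box_cells N x y z 2 2 1 \in T.

Definition memT k h cr (T : {set {set cell N}}) : pred desc :=
  fun d => (d \in alld h cr) && (emb k d \in T).

Lemma emb_inD k d (r : cell N) : k <= cz r -> (r \in emb k d) = inD d (cx r, cy r, cz r - k).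
Proof. move=> hk; rewrite inE /inD /=; lia. Qed.

Lemma real_cell k h (q : cell3) : q \in wcells h -> k + h <= N ->
  exists r : cell N, [/\ cx r = q.1.1, cy r = q.1.2 & cz r = k + q.2].
Proof.
case: q => [[x y] z]; rewrite mem_wcells /= => /and3P[hx hy hz] hN.
have hz' : k + z < N by lia.
by exists (Ordinal hx, Ordinal hy, Ordinal hz').
Qed.

Lemma cover_in (T : {set {set cell N}}) (r : cell N) : is_tiling T -> exists2 S, S \in T & r \in S.
Proof.
case=> /and3P[/eqP cT _ _] _.
have : r \in cover T by rewrite cT inE.
by case/bigcupP => S ST rS; exists S.
Qed.

Lemma emb_slab k d : dO d < 3 -> dX d + da (dO d) <= 4 -> dY d + db (dO d) <= 4 ->
  k + dZ d + dc (dO d) <= N -> is_slab (emb k d).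
Proof.
move=> ho hx hy hz.
exists (dX d), (dY d), (k + dZ d), (da (dO d)), (db (dO d)), (dc (dO d)); split; last first.
  by split => //; rewrite /box_inside hx hy hz.
by move: ho; case: (dO d) => [|[|[|o]]].
Qed.

Lemma pr_cube k h q o : cubeOK h q -> o < 3 -> k + h <= N ->
  exists a b, [/\ pr q o = [:: a; b],
    emb k a :|: emb k b = box_cells N q.1.1 q.1.2 (k + q.2) 2 2 2,
    [disjoint emb k a & emb k b], is_slab (emb k a) & is_slab (emb k b)].
Proof.
case: q => [[X Y] Z]; rewrite /cubeOK /= => /and3P[hX hY hZ] ho hN.
case: o ho => [|[|[|o]]] // _; eexists; eexists; (split; first by []);
  rewrite /emb /dO /dX /dY /dZ /da /db /dc /=.
all: try (apply/setP => r; rewrite !inE; lia).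
all: try (rewrite -setI_eq0; apply/eqP/setP => r; rewrite !inE; lia).
all: try (apply: (@emb_slab k (0, _, _, _)); rewrite /dO /dX /dY /dZ /da /db /dc /=; lia).
all: try (apply: (@emb_slab k (1, _, _, _)); rewrite /dO /dX /dY /dZ /da /db /dc /=; lia).
all: try (apply: (@emb_slab k (2, _, _, _)); rewrite /dO /dX /dY /dZ /da /db /dc /=; lia).
Qed.


Definition inj_ok h cr := all (fun d => all (fun d' => (d == d') ||
  has (fun q => inD d q != inD d' q) (wcells h)) (alld h cr)) (alld h cr).

Lemma disj_neq (A B : {set cell N}) : [disjoint A & B] -> A != set0 -> A != B.
Proof.
move=> dAB /set0Pn[x xA]; apply/eqP => E; subst B.
by have := disjointFr dAB xA; rewrite xA.
Qed.

Lemma box_cube_inside k h X Y Z : X <= 2 -> Y <= 2 -> Z.+2 <= h -> k + h <= N ->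
  box_inside N X Y (k + Z) 2 2 2.
Proof. rewrite /box_inside; lia. Qed.

Section Win.
Variables (k h : nat) (cr : bool) (T : {set {set cell N}}).
Hypotheses (tT : is_tiling T) (cT : canb k T) (hN : k + h <= N)
  (hcr : cr || (k + h == N)) (hinj : inj_ok h cr).
Local Notation mem := (memT k h cr T).

Lemma tI : trivIset T. Proof. by case: tT => /and3P[]. Qed.

Lemma canon_cell (r : cell N) : cz r < k ->
  exists2 C, C \in T & (r \in C /\ forall r', r' \in C -> cz r' = cz r).
Proof.
move=> rk; have := ltn_ord r.1.1; have := ltn_ord r.1.2 => hy hx.
exists (box_cells N (cx r %/ 2 * 2) (cy r %/ 2 * 2) (cz r) 2 2 1).
  apply: cT => //; rewrite /cx /cy; lia.
split; first by rewrite inE; lia.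
by move=> r'; rewrite inE; lia.
Qed.

Lemma low_slab S (r : cell N) : S \in T -> r \in S -> cz r < k ->
  forall r', r' \in S -> cz r' = cz r.
Proof.
move=> ST rS rk; case: (canon_cell rk) => C CT [rC hC].
by rewrite (part_eq tI ST CT rS rC).
Qed.

Lemma emb_inj d d' : d \in alld h cr -> d' \in alld h cr -> emb k d = emb k d' -> d = d'.
Proof.
move=> hd hd' e; have := allP hinj d hd => /allP /(_ d' hd') /orP[/eqP //|/hasP[q qw]].
case: (real_cell qw hN) => r [e1 e2 e3].
have hk : k <= cz r by rewrite e3 leq_addr.
have E : (cx r, cy r, cz r - k) = q by rewrite e1 e2 e3 addKn; case: (q) => [[]].
by rewrite -E -!emb_inD // e eqxx.
Qed.

Lemma embE d d' : d \in alld h cr -> d' \in alld h cr -> (emb k d == emb k d') = (d == d').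
Proof. by move=> hd hd'; apply/eqP/eqP => [/emb_inj|->]; [apply|]. Qed.

Lemma emb_corner e : e \in alld h cr -> exists r : cell N, r \in emb k e /\ cz r = k + dZ e.
Proof.
rewrite mem_alld => /validd_bounds [h1 h2 h3 h4].
have h4' : k + dZ e < N by lia.
exists (Ordinal h2, Ordinal h3, Ordinal h4'); split => //.
rewrite inE /cx /cy /cz /=.
have := da_ge1 (dO e); have := db_ge1 (dO e); have := dc_ge1 (dO e); lia.
Qed.

Lemma Hcov' q : q \in wcells h -> exists d, mem d && inD d q.
Proof.
move=> qw; case: (real_cell qw hN) => r [e1 e2 e3].
have hk : k <= cz r by rewrite e3 leq_addr.
have E : (cx r, cy r, cz r - k) = q by rewrite e1 e2 e3 addKn; case: (q) => [[]].
have qh : q.2 < h by move: qw; rewrite mem_wcells => /and3P[].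
case: (cover_in r tT) => S ST rS.
case: (tT.2 S ST) => x0 [y0 [z0 [a [b [c [ho [/and3P[ix iy iz] eS]]]]]]].
have [o [o3 ea eb ec]] : exists o, [/\ o < 3, da o = a, db o = b & dc o = c].
  by case/or3P: ho => /and3P[/eqP-> /eqP-> /eqP->]; [exists 0 | exists 1 | exists 2].
have rS' := rS; rewrite eS inE in rS'.
have kz : k <= z0.
  rewrite leqNgt; apply/negP => lt.
  have hx' : x0 < 4 by lia.
  have hy' : y0 < 4 by lia.
  have hz' : z0 < N by lia.
  have r1S : (Ordinal hx', Ordinal hy', Ordinal hz') \in S.
    rewrite eS inE /cx /cy /cz /=; lia.
  have := low_slab ST r1S lt rS; rewrite /cz /= => ez.
  move: hk; rewrite /cz ez; lia.
exists (o, x0, y0, z0 - k).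
have Sd : emb k (o, x0, y0, z0 - k) = S.
  by rewrite /emb /dO /dX /dY /dZ /= ea eb ec subnKC.
apply/andP; split; first (apply/andP; split).
- rewrite mem_alld /validd /dO /dX /dY /dZ /= ea eb ec o3 /=.
  have hzr : z0 <= cz r by case/and4P: rS'.
  have hq2 : z0 - k < h.
    move: hzr qh; rewrite e3; case: (q) => [[x y] z] /=; lia.
  apply/and4P; split; [lia | lia | exact: hq2 |].
  by case: (cr) hcr => //= /eqP hkh; lia.
- by rewrite Sd.
- by rewrite -E -emb_inD // Sd.
Qed.

Lemma Huni' d d' q : q \in wcells h -> mem d -> mem d' -> inD d q -> inD d' q -> d = d'.
Proof.
move=> qw /andP[hd ed] /andP[hd' ed'] i i'.
case: (real_cell qw hN) => r [e1 e2 e3].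
have hk : k <= cz r by rewrite e3 leq_addr.
have E : (cx r, cy r, cz r - k) = q by rewrite e1 e2 e3 addKn; case: (q) => [[]].
have r1 : r \in emb k d by rewrite emb_inD // E.
have r2 : r \in emb k d' by rewrite emb_inD // E.
exact: emb_inj hd hd' (part_eq tI ed ed' r1 r2).
Qed.

Lemma do_flip f : flipOK h f -> all mem (pr f.1.1 f.1.2) ->
  exists T', [/\ flip T T', is_tiling T', canb k T' &
                 forall d, memT k h cr T' d = applyF mem f d].
Proof.
case/and4P => cOK o1 o2 o12 Hall.
have hZ : (f.1.1).2.+2 <= h by case/and3P: cOK.
case: (pr_cube (k:=k) cOK o1 hN) => a [b [pa eab dab sa sb]].
case: (pr_cube (k:=k) cOK o2 hN) => c [d [pc ecd dcd sc sd]].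
have Hall' := Hall; rewrite pa /= in Hall'.
case/and3P: Hall' => /andP[aA aT] /andP[bA bT] _.
have cA : c \in alld h cr by apply: (pr_valid cr cOK o2); rewrite pc inE eqxx.
have dA : d \in alld h cr by apply: (pr_valid cr cOK o2); rewrite pc !inE eqxx orbT.
have a0 := slab_nonempty sa; have c0 := slab_nonempty sc; have d0 := slab_nonempty sd.
have AB := disj_neq dab a0.
have eCD : emb k c :|: emb k d = emb k a :|: emb k b by rewrite ecd eab.
set T' := (T :\: [set emb k a; emb k b]) :|: [set emb k c; emb k d].
have pT' := partition_replace tT.1 aT bT c0 d0 dcd eCD.
have tT' : is_tiling T'.
  split => // S; rewrite !inE => /orP[/andP[_ ST] | /orP[/eqP-> | /eqP->]] //.
  exact: tT.2.
have neq : forall e e', e \in pr f.1.1 f.1.2 -> e' \in pr f.1.1 f.2 -> e != e'.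
  move=> e e' he he'; apply/eqP => E; subst e'.
  by move: o12; rewrite -(pr_dO o1 he) -(pr_dO o2 he') eqxx.
have ainp : a \in pr f.1.1 f.1.2 by rewrite pa inE eqxx.
have binp : b \in pr f.1.1 f.1.2 by rewrite pa !inE eqxx orbT.
have cinp : c \in pr f.1.1 f.2 by rewrite pc inE eqxx.
have CAB : emb k c \notin [set emb k a; emb k b].
  rewrite !inE !embE //.
  by rewrite negb_or !(eq_sym c) (neq _ _ ainp cinp) (neq _ _ binp cinp).
have canT' : canb k T'.
  move=> z x y zk hx hy; have K := cT zk hx hy.
  rewrite !inE K andbT; apply/orP; left.
  have nK : forall e, e \in alld h cr -> box_cells N x y z 2 2 1 != emb k e.
    move=> e eA; case: (emb_corner eA) => r [rE rz].
    apply/eqP => E; have := rE; rewrite -E inE => /and3P[_ _ /andP[_ hz]].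
    rewrite rz addn1 ltnS in hz.
    by have := leq_ltn_trans (leq_trans (leq_addr _ _) hz) zk; rewrite ltnn.
  by rewrite (negbTE (nK _ aA)) (negbTE (nK _ bA)).
exists T'; split => //.
- split => //; split => //.
  exists (emb k a), (emb k b), (emb k c), (emb k d).
  split => //; split => //; split => //; split.
    exists (f.1.1).1.1, (f.1.1).1.2, (k + (f.1.1).2); split; last by [].
    by case/and3P: cOK => c1 c2 c3; exact: box_cube_inside c1 c2 c3 hN.
  split => //; split => //; split => //; split => //; split => //.
  apply/negP => /eqP E; move: CAB; rewrite -E !inE eqxx; done.
- move=> e; rewrite /memT /applyF.
  case eA: (e \in alld h cr) => /=; last first.
    by apply/esym/negbTE; apply: contra (negbT eA) => /(pr_valid cr cOK o2).
  rewrite !inE pa pc !inE !embE //.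
  by rewrite andbC.
Qed.
End Win.
End Real.


Fixpoint numv (B : nat) (v : seq nat) : nat :=
  if v is a :: v' then a * B ^ size v' + numv B v' else 0.

Lemma numv_lt B v : all (fun a => a < B) v -> numv B v < B ^ size v.
Proof.
elim: v => [|a v IH] /=; first by rewrite expn0.
case/andP => ha hv; have := IH hv; rewrite expnS => hl.
set X := B ^ size v in hl *.
apply: (@leq_trans (a.+1 * X)); first by rewrite mulSn addnC ltn_add2r.
by rewrite leq_mul2r ha orbT.
Qed.

Lemma lexlt_numv B v w : size v = size w -> all (fun a => a < B) v ->
  all (fun a => a < B) w -> lexlt v w -> numv B v < numv B w.
Proof.
elim: v w => [|a v IH] [|b w] //= [e] /andP[ha hv] /andP[hb hw] /orP[lt | /andP[/eqP <- l]].
- rewrite e; have := numv_lt hw; have := numv_lt hv; rewrite e.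
  set X := B ^ size w => h1 h2.
  apply: (@leq_trans (a.+1 * X)); first by rewrite mulSn addnC ltn_add2r.
  by apply: leq_trans (leq_addr _ _); rewrite leq_mul2r lt orbT.
- by rewrite e ltn_add2l; apply: IH.
Qed.

Lemma vec_bound h cr mem : all (fun a => a < (6 * size (alld h cr)).+1) (vec h cr mem).
Proof.
rewrite /vec; elim: (iota 0 h) => // z s IH.
rewrite (_ : flatten _ = coords h (lay h cr mem z) ++ flatten [seq coords h (lay h cr mem z) | z <- s]) // all_cat IH andbT /=.
set l := lay h cr mem z.
have hl : size l <= size (alld h cr) by rewrite size_filter count_size.
have c1 := count_size (fun d => dO d == 0) l.
have c2 := count_size (fun d => [&& dO d != 0, noncross h d & has (isPartner d) l]) l.
move: hl c1 c2.
set A := count _ l; set C := count _ l; set S := size l; set D := size (alld h cr).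
move=> hl c1 c2; rewrite !ltnS; apply/andP; split; lia.
Qed.

Lemma size_flat h (F : nat -> seq desc) s : size (flatten [seq coords h (F z) | z <- s]) = 2 * size s.
Proof.
elim: s => // z s IH.
rewrite (_ : flatten _ = coords h (F z) ++ flatten [seq coords h (F z) | z <- s]) //.
by rewrite size_cat IH /= mulnS.
Qed.

Lemma size_vec h cr mem : size (vec h cr mem) = 2 * h.
Proof. by rewrite /vec size_flat size_iota. Qed.

Section Main.
Variable N : nat.

Lemma step1 k h cr (T : {set {set cell N}}) : k + h <= N -> cr || (k + h == N) -> uniq (alld h cr) -> inj_ok h cr ->
  chk h cr (wcells h) 64 [::] 0 -> is_tiling T -> canb k T ->
  canb k.+1 T \/ exists T', [/\ flip T T', is_tiling T', canb k T' &
     lexlt (vec h cr (memT k h cr T)) (vec h cr (memT k h cr T'))].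
Proof.
move=> hN hcr hu hinj hchk tT cT.
have Hmem : forall d, memT k h cr T d -> d \in alld h cr by move=> d /andP[].
have HP : {subset [::] <= memT k h cr T} by [].
case: (chk_sound hu Hmem (Hcov' tT cT hN hcr hinj) (Huni' tT hN hinj) hchk HP)
  => [Hg | [f /and3P[fok Hall Hlex]]].
- left; move=> z x y; rewrite ltnS leq_eqVlt => /orP[/eqP-> | zk] hx hy; last exact: cT.
  have : memT k h cr T (0, x, y, 0).
    apply: (allP Hg); move: hx hy => /orP[]/eqP-> /orP[]/eqP->; by rewrite !inE.
  by case/andP => _; rewrite /emb /= addn0.
- right; case: (do_flip tT cT hN hcr hinj fok Hall) => T' [fl tT' cT' eq].
  exists T'; split => //.
  suff -> : vec h cr (memT k h cr T') = vec h cr (applyF (memT k h cr T) f) by [].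
  rewrite /vec /lay; congr flatten; apply: eq_map => z; congr coords.
  by apply: eq_filter => d; rewrite eq.
Qed.

Lemma measure_dec h cr (m1 m2 : pred desc) :
  lexlt (vec h cr m1) (vec h cr m2) ->
  (6 * size (alld h cr)).+1 ^ (2 * h) - numv (6 * size (alld h cr)).+1 (vec h cr m2) <
  (6 * size (alld h cr)).+1 ^ (2 * h) - numv (6 * size (alld h cr)).+1 (vec h cr m1).
Proof.
move=> lx.
have e : size (vec h cr m1) = size (vec h cr m2) by rewrite !size_vec.
have l1 := lexlt_numv e (vec_bound _ _ _) (vec_bound _ _ _) lx.
have l2 := numv_lt (vec_bound h cr m2); rewrite size_vec in l2.
exact: ltn_sub2l (ltn_trans l1 l2) l1.
Qed.

Lemma step k h cr : k + h <= N -> cr || (k + h == N) -> uniq (alld h cr) -> inj_ok h cr ->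
  chk h cr (wcells h) 64 [::] 0 ->
  forall T : {set {set cell N}}, is_tiling T -> canb k T ->
  exists T', [/\ clos_refl_trans _ (@flip N) T T', is_tiling T' & canb k.+1 T'].
Proof.
move=> hN hcr hu hinj hchk.
pose M := fun T : {set {set cell N}} =>
  (6 * size (alld h cr)).+1 ^ (2 * h) - numv (6 * size (alld h cr)).+1 (vec h cr (memT k h cr T)).
suff H : forall m T, M T <= m -> is_tiling T -> canb k T ->
    exists T', [/\ clos_refl_trans _ (@flip N) T T', is_tiling T' & canb k.+1 T'].
  by move=> T; exact: H _ T (leqnn _).
elim=> [|m IH] T hm tT cT.
all: case: (step1 hN hcr hu hinj hchk tT cT) => [c1 | [T' [fl tT' cT' lx]]];
  first by exists T; split => //; apply: rt_refl.
all: have lt : M T' < M T by exact: measure_dec lx.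
- by move: hm; rewrite leqn0 => /eqP hm; rewrite hm in lt.
- have := IH T' _ tT' cT'; case; first by rewrite -ltnS; exact: leq_trans lt hm.
  move=> T'' [r t c]; exists T''; split => //.
  by apply: rt_trans r; apply: rt_step.
Qed.

Definition can (r : cell N) : {set cell N} := box_cells N (cx r %/ 2 * 2) (cy r %/ 2 * 2) (cz r) 2 2 1.

Lemma cx_lt (r : cell N) : cx r < 4. Proof. exact: ltn_ord. Qed.
Lemma cy_lt (r : cell N) : cy r < 4. Proof. exact: ltn_ord. Qed.
Lemma cz_lt (r : cell N) : cz r < N. Proof. exact: ltn_ord. Qed.

Lemma can_in (r : cell N) : r \in can r.
Proof. rewrite inE; have := cx_lt r; have := cy_lt r; lia. Qed.

Lemma can_eq (r s : cell N) : s \in can r -> can s = can r.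
Proof.
rewrite inE => H; rewrite /can.
have e1 : cx s %/ 2 * 2 = cx r %/ 2 * 2 by lia.
have e2 : cy s %/ 2 * 2 = cy r %/ 2 * 2 by lia.
have e3 : cz s = cz r by lia.
by rewrite e1 e2 e3.
Qed.

Lemma can_canb k (r : cell N) T : canb k T -> cz r < k -> can r \in T.
Proof.
move=> cT rk; apply: cT => //; have := cx_lt r; have := cy_lt r; rewrite /cx /cy; lia.
Qed.

Lemma can_slab (r : cell N) : is_slab (can r).
Proof.
exists (cx r %/ 2 * 2), (cy r %/ 2 * 2), (cz r), 2, 2, 1; split => //; split => //.
have := cx_lt r; have := cy_lt r; have := cz_lt r; rewrite /box_inside; lia.
Qed.

Definition Tc : {set {set cell N}} := [set can r | r in [set: cell N]].

Lemma Tc_tiling : is_tiling Tc.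
Proof.
split; last by move=> S /imsetP[r _ ->]; exact: can_slab.
apply/and3P; split.
- apply/eqP/setP => r; rewrite inE; apply/bigcupP; exists (can r); last exact: can_in.
  by apply/imsetP; exists r.
- apply/trivIsetP => A B /imsetP[r _ ->] /imsetP[s _ ->] ne.
  apply: disjP => x xA xB; move: ne.
  by rewrite -(can_eq xA) -(can_eq xB) eqxx.
- apply/imsetP => [[r _ e]]; have := can_in r; by rewrite -e inE.
Qed.

Lemma canb_unique (T T' : {set {set cell N}}) : is_tiling T -> is_tiling T' -> canb N T -> canb N T' -> T = T'.
Proof.
suff H : forall T T' : {set {set cell N}}, is_tiling T -> canb N T -> canb N T' -> {subset T <= T'}.
  by move=> tT tT' cT cT'; apply/setP => S; apply/idP/idP; [exact: H | exact: H].
move=> T1 T2 tT cT cT' S ST.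
case/set0Pn: (slab_nonempty (tT.2 S ST)) => r rS.
have CT := can_canb cT (cz_lt r).
by rewrite (part_eq (tI tT) ST CT rS (can_in r)); exact: can_canb cT' (cz_lt r).
Qed.

End Main.


Definition comp_ok h cr := [&& uniq (alld h cr), inj_ok h cr & chk h cr (wcells h) 64 [::] 0].

Lemma comp4 : comp_ok 4 true. Proof. vm_compute. reflexivity. Qed.
Lemma comp3 : comp_ok 3 false. Proof. vm_compute. reflexivity. Qed.
Lemma comp2 : comp_ok 2 false. Proof. vm_compute. reflexivity. Qed.
Lemma comp1 : comp_ok 1 false. Proof. vm_compute. reflexivity. Qed.

Lemma reach N : forall m k (T : {set {set cell N}}), N - k = m -> is_tiling T -> canb k T ->
  exists T', [/\ clos_refl_trans _ (@flip N) T T', is_tiling T' & canb N T'].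
Proof.
elim=> [|m IH] k T e tT cT.
  exists T; split => //; first exact: rt_refl.
  by move=> z x y zN; apply: cT; lia.
have [h [cr [hN hcr hc]]] : exists h cr, [/\ k + h <= N, cr || (k + h == N) & comp_ok h cr].
  case: (leqP (k + 4) N) => h4; first by exists 4, true; rewrite h4 comp4.
  have : (N - k = 1) \/ (N - k = 2) \/ (N - k = 3) by lia.
  case=> [e1|[e1|e1]]; [exists 1, false | exists 2, false | exists 3, false];
    rewrite ?comp1 ?comp2 ?comp3 /=; split => //; try (apply/eqP); lia.
case/and3P: hc => hu hinj hchk.
case: (step hN hcr hu hinj hchk tT cT) => T1 [r1 t1 c1].
case: (IH k.+1 T1 _ t1 c1) => [|T2 [r2 t2 c2]]; first lia.
exists T2; split => //; exact: rt_trans r1 r2.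
Qed.

Theorem proposition5p2 (N : nat) (HN : 0 < N) : one_flip_component N.
Proof.
split; first by exists (Tc N); exact: Tc_tiling.
move=> T T' tT tT'.
have c0 : forall T : {set {set cell N}}, canb 0 T by [].
case: (reach (erefl (N - 0)) tT (c0 T)) => T1 [r1 t1 c1].
case: (reach (erefl (N - 0)) tT' (c0 T')) => T2 [r2 t2 c2].
have E := canb_unique t1 t2 c1 c2; subst T2.
exact: rt_trans r1 (rt_sym r2).
Qed.
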